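(* For every sequence $S\in[n]^m$ and every finite set $X\subset\mathbb Q\setminus[n]$ of auxiliary elements, $\mathrm{OPT}(S)=\mathrm{OPT}_X(S)$.
   Context: Dynamic BST model on a finite key set $K\subset\mathbb Q$: an algorithm chooses an initial BST on $K$. To serve access $s_t$ it touches a set of nodes forming a connected subtree containing the root and $s_t$, may rearrange the touched nodes into any BST shape (untouched subtrees reattached validly), and pays the number of touched nodes. $\mathrm{OPT}(S)$ is the minimum total cost of serving $S$ over all offline algorithms with key set $K=[n]$. $\mathrm{OPT}_X(S)$ is the same minimum with key set $K=[n]\cup X$; the accesses are still the keys of $S$, all of which lie in $[n]$. *)

(* Defs.v *)
From mathcomp Require Import all_boot all_order all_algebra.
Set Implicit Arguments. Unset Strict Implicit. Unset Printing Implicit Defensive.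
Import Order.TTheory GRing.Theory Num.Theory.
Local Open Scope ring_scope.

Inductive tree : Type :=
| Leaf : tree
| Node : tree -> rat -> tree -> tree.

Fixpoint inorder (t : tree) : seq rat :=
  match t with
  | Leaf => [::]
  | Node l k r => inorder l ++ k :: inorder r
  end.

Definition bst (K : seq rat) (t : tree) : Prop :=
  sorted <%R (inorder t) /\ inorder t =i K.

(* P is the node set of a connected subtree of t containing the root
   (or empty): P is a subset of the keys of t closed under taking parents. *)
Fixpoint topset (P : seq rat) (t : tree) : Prop :=
  match t with
  | Leaf => True
  | Node l k r =>
      if k \in P then topset P l /\ topset P r
      else forall x, x \in inorder t -> x \notin P
  end.

(* The untouched subtrees hanging off the touched part P, in in-order. *)
Fixpoint hang (P : seq rat) (t : tree) : seq tree :=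
  match t with
  | Leaf => [::]
  | Node l k r => if k \in P then hang P l ++ hang P r else [:: t]
  end.

(* One access step: serving access s in tree T by touching the node set P
   (a connected subtree containing root and s), rearranging the touched nodes
   into any BST shape with the untouched subtrees reattached, giving T'. *)
Definition step (K : seq rat) (T T' : tree) (s : rat) (P : seq rat) : Prop :=
  [/\ uniq P, {subset P <= inorder T}, topset P T & s \in P] /\
  [/\ bst K T', topset P T' & hang P T = hang P T'].

Inductive exec (K : seq rat) : tree -> seq rat -> nat -> Prop :=
| exec_nil T : exec K T [::] 0
| exec_cons T T' s S P c :
    step K T T' s P -> exec K T' S c -> exec K T (s :: S) (size P + c).

Definition achievable (K : seq rat) (S : seq rat) (c : nat) : Prop :=
  exists T, bst K T /\ exec K T S c.

Definition is_OPT (K : seq rat) (S : seq rat) (v : nat) : Prop :=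
  achievable K S v /\ forall c, achievable K S c -> (v <= c)%N.

Definition natset (n : nat) : seq rat := [seq (i%:R : rat) | i <- iota 1 n].

(* Main.v *)
Require Import Defs.
From Stdlib Require Import Classical_Prop.
From mathcomp Require Import all_boot all_order all_algebra.
Set Implicit Arguments. Unset Strict Implicit. Unset Printing Implicit Defensive.
Import Order.TTheory GRing.Theory Num.Theory.
Local Open Scope ring_scope.


Definition srt (s : seq rat) := sorted <%R s.

Lemma srt_node l k r :
  srt (inorder (Node l k r)) <->
  [/\ srt (inorder l), srt (inorder r), all (fun z => z < k) (inorder l)
    & all (fun z => k < z) (inorder r)].
Proof.
rewrite /srt /= !sorted_pairwise; try exact: lt_trans.
rewrite pairwise_cat pairwise_cons allrel_consr.
split.
  by case/and3P=> /andP[a _] b /andP[c d].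
case=> a b c d; rewrite a b c d /= andbT.
apply/allrelP=> u w uin win; apply: lt_trans (allP c _ uin) (allP d _ win).
Qed.

Definition isnode t := if t is Node _ _ _ then true else false.

Fixpoint topp (p : pred rat) t : Prop :=
  match t with
  | Leaf => True
  | Node l k r =>
      if p k then topp p l /\ topp p r
      else forall x, x \in inorder t -> ~~ p x
  end.

Fixpoint hangp (p : pred rat) t : seq tree :=
  match t with
  | Leaf => [::]
  | Node l k r => if p k then hangp p l ++ hangp p r else [:: t]
  end.

Lemma topsetE P t : topset P t <-> topp (fun z => z \in P) t.
Proof.
elim: t => //= l IHl k r IHr; case: (k \in P); last by [].
by split; case=> a b; split; try (by apply/IHl); apply/IHr.
Qed.

Lemma hangE P t : hang P t = hangp (fun z => z \in P) t.
Proof. by elim: t => //= l -> k r ->. Qed.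

Lemma topp_cong p q t : {in inorder t, p =1 q} -> topp p t -> topp q t.
Proof.
elim: t => //= l IHl k r IHr E.
have Ek : p k = q k by apply: E; rewrite mem_cat in_cons eqxx orbT.
rewrite -Ek; case: (p k).
  case=> Hl Hr; split; [apply: IHl Hl | apply: IHr Hr] => z zin; apply: E;
  by rewrite mem_cat ?zin // in_cons zin !orbT.
by move=> H z zin; rewrite -E //; apply: H.
Qed.

Lemma hangp_cong p q t : {in inorder t, p =1 q} -> hangp p t = hangp q t.
Proof.
elim: t => //= l IHl k r IHr E.
have Ek : p k = q k by apply: E; rewrite mem_cat in_cons eqxx orbT.
rewrite -Ek; case: (p k) => //.
rewrite IHl ?IHr // => z zin; apply: E;
by rewrite mem_cat ?zin // in_cons zin !orbT.
Qed.

Lemma untouched p t : (forall z, z \in inorder t -> ~~ p z) ->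
  topp p t /\ hangp p t = if isnode t then [:: t] else [::].
Proof.
case: t => //= l k r H.
have -> : p k = false by apply/negbTE/H; rewrite mem_cat in_cons eqxx orbT.
by [].
Qed.

Definition hgood p t h :=
  isnode h && all (fun z => (z \in inorder t) && ~~ p z) (inorder h).

Lemma hang_good p t : topp p t -> all (hgood p t) (hangp p t).
Proof.
elim: t => //= l IHl k r IHr.
case pk: (p k).
  case=> /IHl Hl /IHr Hr; rewrite all_cat; apply/andP; split.
    apply: sub_all Hl => h /andP[nh /allP H]; rewrite /hgood nh; apply/allP => z /H /andP[zin ->].
    by rewrite mem_cat zin.
  apply: sub_all Hr => h /andP[nh /allP H]; rewrite /hgood nh; apply/allP => z /H /andP[zin ->].
  by rewrite mem_cat in_cons zin !orbT.
move=> H; rewrite /= andbT /hgood /=; apply/allP => z zin.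
by rewrite zin H.
Qed.

Fixpoint tmax t := match t with
  | Leaf => 0 | Node _ k r => if r is Leaf then k else tmax r end.
Fixpoint delmax t := match t with
  | Leaf => Leaf | Node l k r => if r is Leaf then l else Node l k (delmax r) end.

Lemma delmaxE t : isnode t -> inorder t = rcons (inorder (delmax t)) (tmax t).
Proof.
elim: t => // l _ k r IHr _; case: r IHr => [|a b c] IH; first by rewrite /= cats1.
move: (IH isT); set t' := Node a b c => E.
change (inorder l ++ k :: inorder t' = rcons (inorder l ++ k :: inorder (delmax t')) (tmax t')).
by rewrite E rcons_cat rcons_cons.
Qed.

Definition join l r := if l is Leaf then r else Node (delmax l) (tmax l) r.

Fixpoint del x t := match t with
  | Leaf => Leaf
  | Node l k r => if x == k then join l r
                  else if x < k then Node (del x l) k r else Node l k (del x r)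
  end.

Lemma inorder_join l r : inorder (join l r) = inorder l ++ inorder r.
Proof.
case: l => // a b c; rewrite /join [inorder (Node a b c)](delmaxE) //=.
by rewrite cat_rcons.
Qed.

Lemma inorder_del x t : srt (inorder t) -> inorder (del x t) = filter (predC1 x) (inorder t).
Proof.
elim: t => //= l IHl k r IHr /srt_node [sl sr al ar].
rewrite filter_cat /=.
have xl : x == k -> all (predC1 x) (inorder l).
  move=> /eqP ->; apply: sub_all al => z /=; by move/lt_eqF => ->.
have xr : x == k -> all (predC1 x) (inorder r).
  move=> /eqP ->; apply: sub_all ar => z /=; rewrite eq_sym; by move/lt_eqF => ->.
case: ifP => xk.
  by rewrite inorder_join (eqP xk) eqxx /= -(eqP xk) !(all_filterP _) // ?xl ?xr.
rewrite /= eq_sym xk /=; case: ifP => xlt /=.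
  rewrite IHl //; congr (_ ++ _ :: _); apply/esym/all_filterP.
  by apply: sub_all ar => z /= kz; apply/eqP => zx; move: kz; rewrite zx ltNge (ltW xlt).
rewrite IHr //; congr (_ ++ _ :: _); apply/esym/all_filterP.
have kx : k < x by rewrite lt_neqAle eq_sym xk /= leNgt xlt.
by apply: sub_all al => z /= kz; apply/eqP => zx; move: kz; rewrite zx ltNge (ltW kx).
Qed.


Lemma inN z l k r : (z \in inorder (Node l k r)) = [|| z \in inorder l, z == k | z \in inorder r].
Proof. by rewrite /= mem_cat in_cons. Qed.

Lemma tmax_in t : isnode t -> tmax t \in inorder t.
Proof. by move=> nt; rewrite (delmaxE nt) mem_rcons mem_head. Qed.

Lemma tmax_max t : isnode t -> srt (inorder t) -> forall z, z \in inorder (delmax t) -> z < tmax t.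
Proof.
move=> nt; rewrite (delmaxE nt) /srt -cats1 sorted_pairwise; last exact: lt_trans.
rewrite pairwise_cat => /and3P[/allrelP H _ _] z zin.
by apply: H; rewrite ?mem_head.
Qed.

Lemma delmax_sub t : isnode t -> forall z, z \in inorder (delmax t) -> z \in inorder t.
Proof. by move=> nt z zin; rewrite (delmaxE nt) mem_rcons in_cons zin orbT. Qed.

Lemma srt_delmax t : isnode t -> srt (inorder t) -> srt (inorder (delmax t)).
Proof. by move=> nt; rewrite (delmaxE nt) /srt -cats1 => /cat_sorted2 []. Qed.

Lemma eqmapA (f g : tree -> tree) (P : pred tree) hs :
  all P hs -> (forall t, P t -> f t = g t) -> map f hs = map g hs.
Proof. by elim: hs => //= h hs IH /andP[Ph Phs] E; rewrite E // IH. Qed.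

Lemma filter_node_all hs : all isnode hs -> filter isnode hs = hs.
Proof. by move=> /all_filterP. Qed.

Lemma hang_node p t : topp p t -> all isnode (hangp p t).
Proof. by move=> /hang_good; apply: sub_all => h /andP[]. Qed.

Lemma dm1 p l : isnode l -> topp p l -> p (tmax l) ->
  topp p (delmax l) /\ hangp p (delmax l) = hangp p l.
Proof.
elim: l => // a _ k b IHb _ tl pm.
have tm := tmax_in (t:=Node a k b) isT.
move: tl => /=; case pk: (p k); last by move=> H; move: (H _ tm); rewrite pm.
case=> ta tb; case: b IHb tb pm tm => [|c d e] IH tb pm tm.
  by split => //; rewrite /= cats0.
have [t1 h1] := IH isT tb pm.
move: t1 h1; set X := delmax _ => t1 h1.
by rewrite /= pk h1.
Qed.

Definition fdm m t := if m \in inorder t then delmax t else t.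

Lemma dm2 p l : isnode l -> srt (inorder l) -> topp p l -> ~~ p (tmax l) ->
  topp p (delmax l) /\
  hangp p (delmax l) = filter isnode (map (fdm (tmax l)) (hangp p l)).
Proof.
elim: l => // a _ k b IHb _ sl tl pm.
have tm := tmax_in (t:=Node a k b) isT.
have [sa sb aa ab] := (srt_node _ _ _).1 sl.
move: tl; rewrite [topp p (Node a k b)]/=; case pk: (p k); last first.
  move=> H.
  have [t1 h1] := untouched (p:=p) (t:=delmax (Node a k b)) (fun z zin => H z (@delmax_sub (Node a k b) isT z zin)).
  split => //; rewrite h1 [hangp p (Node a k b)]/= pk /= /fdm tm.
  by case: (isnode _).
case=> ta tb; case: b IHb sb ab tb pm tm sl => [|c d e] IH sb ab tb pm tm sl.
  by move: pm; rewrite /= pk.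
have [t1 h1] := IH isT sb tb pm.
have mN : tmax (Node c d e) \in inorder (Node c d e) by apply: tmax_in.
move: t1 h1 mN; set X := delmax _; set m := tmax _ => t1 h1 mN.
have -> : tmax (Node a k (Node c d e)) = m by [].
rewrite /= pk h1; split => //.
rewrite map_cat filter_cat; congr (_ ++ _).
have km : k < m by apply: (allP ab).
rewrite (@eqmapA _ id (hgood p a)) ?map_id.
- by rewrite filter_node_all //; apply: hang_node.
- exact: hang_good.
move=> h /andP[_ /allP H]; rewrite /fdm; case: ifP => // mh.
have /andP[ma _] := H _ mh.
by move: (allP aa _ ma); rewrite ltNge (ltW km).
Qed.


Definition gdel (p : pred rat) x m t :=
  if x \in inorder t then del x t else if p x && (m \in inorder t) then delmax t else t.

Definition qdel (p : pred rat) x m z :=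
  if p x then (z != x) && (p z || (z == m)) else p z.

Lemma gdel_id p x m t : topp p t -> x \notin inorder t -> (p x -> m \in inorder t -> p m) ->
  filter isnode (map (gdel p x m) (hangp p t)) = hangp p t.
Proof.
move=> tt xn Hm.
rewrite (@eqmapA (gdel p x m) (fun h => h) (hgood p t) (hangp p t)) ?map_id.
- by rewrite filter_node_all //; apply: hang_node.
- exact: hang_good.
move=> h /andP[_ /allP H]; rewrite /gdel; case: ifP => xh.
  by have /andP[xt _] := H _ xh; rewrite xt in xn.
case: ifP => // /andP[px mh].
by have /andP[mt npm] := H _ mh; rewrite (Hm px mt) in npm.
Qed.

Lemma core p x m T :
  srt (inorder T) -> x \in inorder T -> topp p T ->
  all (fun z => (z < x) ==> (z <= m)) (inorder T) ->
  (if m == x then ~~ has (fun z => z < x) (inorder T)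
   else (m < x) && ((m \in inorder T) || ~~ has (fun z => z < x) (inorder T))) ->
  topp (qdel p x m) (del x T) /\
  hangp (qdel p x m) (del x T) = filter isnode (map (gdel p x m) (hangp p T)).
Proof.
elim: T => // l IHl k r IHr sT xin tT Ha Hm.
have [sl sr al ar] := (srt_node _ _ _).1 sT.
have mlex : m <= x by move: Hm; case: eqP => [-> _|_ /andP[/ltW //]].
have qbig : forall z, x < z -> qdel p x m z = p z.
  move=> z xz; rewrite /qdel; case: (p x) => //.
  by rewrite (gt_eqF xz) (gt_eqF (le_lt_trans mlex xz)) orbF.
move: Ha; rewrite [inorder _]/= all_cat /= => /and3P[Hal Hak Har].
move: tT; rewrite [topp p _]/=; case pk: (p k); last first.
  move=> H; have px : ~~ p x := H x xin.
  have qp : qdel p x m =1 p by move=> z; rewrite /qdel (negbTE px).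
  have sub : forall z, z \in inorder (del x (Node l k r)) -> ~~ qdel p x m z.
    by move=> z; rewrite inorder_del // mem_filter qp => /andP[_ zin]; apply: H.
  have [t1 h1] := untouched sub.
  split => //; rewrite h1 /= /gdel xin.
  by case: (isnode _).
case=> tl tr.
case: (ltgtP x k) => [xk | kx | xk].
-
  have xl : x \in inorder l.
    move: xin; rewrite inN (lt_eqF xk) /= => /orP[//|xr].
    by move: (allP ar _ xr); rewrite ltNge (ltW xk).
  have Hml : if m == x then ~~ has (fun z => z < x) (inorder l)
     else (m < x) && ((m \in inorder l) || ~~ has (fun z => z < x) (inorder l)).
    move: Hm; rewrite [inorder _]/= has_cat negb_or inN.
    case: eqP => [_ /andP[] //|_ /andP[-> /=]].
    case/orP => [/or3P[-> // | /eqP mk | mr] | /andP[-> _]]; last by rewrite orbT.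
      by move: (le_lt_trans mlex xk); rewrite mk ltxx.
    by move: (allP ar _ mr) (le_lt_trans mlex xk); rewrite ltNge => /negP + /ltW.
  have [t1 h1] := IHl sl xl tl Hal Hml.
  have qk : qdel p x m k = true by rewrite qbig.
  have qr : {in inorder r, p =1 qdel p x m}.
    by move=> z zr; rewrite qbig //; apply: lt_trans xk (allP ar _ zr).
  rewrite [topp _ _]/= [hangp _ (Node (del x l) k r)]/= qk.
  split; first by split => //; apply: topp_cong qr tr.
  rewrite h1 -(hangp_cong qr) map_cat filter_cat.
  rewrite (gdel_id tr) //.
    apply/negP => xr; move: (allP ar _ xr); by rewrite ltNge (ltW xk).
  move=> _ mr; move: (allP ar _ mr) (le_lt_trans mlex xk) => km mk.
  by move: (lt_trans km mk); rewrite ltxx.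
-
  have xr : x \in inorder r.
    move: xin; rewrite inN (gt_eqF kx) /= => /orP[xl|//].
    by move: (allP al _ xl); rewrite ltNge (ltW kx).
  have km : k <= m by move: Hak; rewrite kx.
  have mx : (m == x) = false.
    apply/negbTE; move: Hm; case: eqP => // _ /hasPn H.
    by move: (H k); rewrite inN eqxx orbT kx => /(_ isT).
  have mT : m \in inorder (Node l k r).
    move: Hm; rewrite mx => /andP[_ /orP[//|/hasPn H]].
    by move: (H k); rewrite inN eqxx orbT kx => /(_ isT).
  have mnl : m \notin inorder l.
    by apply/negP => ml; move: (allP al _ ml); rewrite ltNge km.
  have Hmr : if m == x then ~~ has (fun z => z < x) (inorder r)
     else (m < x) && ((m \in inorder r) || ~~ has (fun z => z < x) (inorder r)).
    rewrite mx; move: Hm; rewrite mx => /andP[-> _] /=.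
    move: mT; rewrite inN (negbTE mnl) /= => /orP[/eqP mk|->//].
    apply/orP; right; apply/hasPn => z zr; apply/negP => zx.
    move: (allP Har _ zr); rewrite zx /= mk => zk.
    by move: (allP ar _ zr); rewrite ltNge zk.
  have [t1 h1] := IHr sr xr tr Har Hmr.
  have qk : qdel p x m k = true by rewrite /qdel pk (lt_eqF kx) /=; case: (p x).
  have ql : {in inorder l, p =1 qdel p x m}.
    move=> z zl; rewrite /qdel; case: (p x) => //.
    have zk := allP al _ zl.
    by rewrite (lt_eqF (lt_trans zk kx)) (lt_eqF (lt_le_trans zk km)) orbF.
  rewrite [topp _ _]/= [hangp _ (Node l k (del x r))]/= qk.
  split; first by split => //; apply: topp_cong ql tl.
  rewrite h1 -(hangp_cong ql) map_cat filter_cat.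
  rewrite (gdel_id tl) //.
    apply/negP => xl; move: (allP al _ xl); by rewrite ltNge (ltW kx).
  by move=> _ ml; rewrite ml in mnl.
-
  subst k.
  have qr : {in inorder r, p =1 qdel p x m}.
    by move=> z zr; rewrite qbig //; apply: (allP ar).
  have xnr : x \notin inorder r by apply/negP => xr; move: (allP ar _ xr); rewrite ltxx.
  have mnr : m \notin inorder r.
    by apply/negP => mr; move: (allP ar _ mr); rewrite ltNge mlex.
  case: l IHl sl al tl Hal Hm sT xin => [|a b c] _ sl al tl Hal Hm sT xin.
    rewrite /= -(hangp_cong qr); split; first by apply: topp_cong qr tr.
    by rewrite (gdel_id tr) // => _ mr; rewrite mr in mnr.
  set L := Node a b c in sl al tl Hal Hm sT xin *.
  have tL : tmax L \in inorder L by apply: tmax_in.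
  have tLx : tmax L < x by apply: (allP al).
  have tLT : tmax L \in inorder (Node L x r) by rewrite inN tL.
  have mx : (m == x) = false.
    apply/negbTE; move: Hm; case: eqP => // _ /hasPn H.
    by move: (H _ tLT); rewrite tLx.
  have mL : m \in inorder L.
    move: Hm; rewrite mx => /andP[mlx /orP[]]; last first.
      by move/hasPn => H; move: (H _ tLT); rewrite tLx.
    rewrite inN (lt_eqF mlx) (negbTE mnr) /= orbF; done.
  have mE : tmax L = m.
    apply/le_anti/andP; split; first by move: (allP Hal _ tL); rewrite tLx.
    move: mL; rewrite (delmaxE (isT : isnode L)) mem_rcons in_cons => /orP[/eqP -> //|md].
    by apply/ltW/tmax_max.
  have qm : qdel p x m m = true by rewrite /qdel pk mx eqxx orbT.
  have qd : {in inorder (delmax L), p =1 qdel p x m}.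
    move=> z zd; rewrite /qdel pk.
    have zm : z < m by rewrite -mE; apply: tmax_max.
    have mlx : m < x by rewrite -mE.
    by rewrite (lt_eqF (lt_trans zm mlx)) (lt_eqF zm) orbF.
  have xnL : x \notin inorder L by apply/negP => xl; move: (allP al _ xl); rewrite ltxx.
  have -> : join L r = Node (delmax L) m r by rewrite -mE.
  have nL : isnode L by [].
  clearbody L.
  rewrite [topp _ _]/= [hangp _ (Node _ m r)]/= qm.
  case pm: (p m).
    have pmL : p (tmax L) by rewrite mE.
    have [t1 h1] := dm1 nL tl pmL.
    split; first by split; [apply: topp_cong qd t1 | apply: topp_cong qr tr].
    rewrite -(hangp_cong qd) -(hangp_cong qr) h1 map_cat filter_cat (gdel_id tl) ?(gdel_id tr) //.
  have pmL : ~~ p (tmax L) by rewrite mE pm.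
  have [t1 h1] := dm2 nL sl tl pmL.
  split; first by split; [apply: topp_cong qd t1 | apply: topp_cong qr tr].
  rewrite -(hangp_cong qd) -(hangp_cong qr) h1 mE map_cat filter_cat (gdel_id tr); last first.
    by move=> _ mr; rewrite mr in mnr.
    by [].
  congr (_ ++ _); congr (filter _ _).
  apply: (@eqmapA _ _ (hgood p L)); first exact: hang_good.
  move=> h /andP[_ /allP H].
  have xh : (x \in inorder h) = false.
    by apply/negP => xh; have /andP[xl _] := H _ xh; rewrite xl in xnL.
  by rewrite /gdel /fdm xh pk.
Qed.


Fixpoint ins x t := match t with
  | Leaf => Node Leaf x Leaf
  | Node l k r => if x < k then Node (ins x l) k r else Node l k (ins x r)
  end.

Definition single x := Node Leaf x Leaf.
Definition hit (a b : rat) t := (a \in inorder t) || (b \in inorder t).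
Definition gins a b x t := if hit a b t then ins x t else t.
Definition below x t := has (fun z => z < x) (inorder t).
Definition ins_hs a b x hs :=
  if has (hit a b) hs then map (gins a b x) hs
  else filter (below x) hs ++ single x :: filter (predC (below x)) hs.

Lemma has_none (P Q : pred tree) hs : all P hs -> (forall t, P t -> ~~ Q t) -> has Q hs = false.
Proof. by elim: hs => //= t hs IH /andP[Pt Ps] H; rewrite (negbTE (H _ Pt)) IH. Qed.

Lemma filter_none (P Q : pred tree) hs : all P hs -> (forall t, P t -> ~~ Q t) -> filter Q hs = [::].
Proof. by elim: hs => //= t hs IH /andP[Pt Ps] H; rewrite (negbTE (H _ Pt)) IH. Qed.

Lemma ins_hs_r a b x hs1 hs2 :
  all (fun t => ~~ hit a b t && ~~ below x t) hs2 ->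
  ins_hs a b x (hs1 ++ hs2) = ins_hs a b x hs1 ++ hs2.
Proof.
move=> H; rewrite /ins_hs has_cat.
rewrite (has_none H); last by move=> t /andP[].
rewrite orbF; case: ifP => _.
  rewrite map_cat; congr (_ ++ _); elim: hs2 H => //= t hs IH /andP[/andP[ht _] Hs].
  by rewrite IH // /gins (negbTE ht).
rewrite !filter_cat.
rewrite (filter_none H); last by move=> t /andP[].
have -> : filter (predC (below x)) hs2 = hs2.
  by apply/all_filterP; apply: sub_all H => t /andP[].
by rewrite cats0 -catA.
Qed.

Lemma ins_hs_l a b x hs1 hs2 :
  all (fun t => ~~ hit a b t && below x t) hs1 ->
  ins_hs a b x (hs1 ++ hs2) = hs1 ++ ins_hs a b x hs2.
Proof.
move=> H; rewrite /ins_hs has_cat.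
rewrite (has_none H); last by move=> t /andP[].
rewrite /=; case: ifP => _.
  rewrite map_cat; congr (_ ++ _); elim: hs1 H => //= t hs IH /andP[/andP[ht _] Hs].
  by rewrite IH // /gins (negbTE ht).
rewrite !filter_cat.
rewrite (filter_none (Q := predC (below x)) H); last by move=> t /andP[_ /= ->].
have -> : filter (below x) hs1 = hs1.
  by apply/all_filterP; apply: sub_all H => t /andP[].
by rewrite -catA.
Qed.

Lemma mem_ins x t z : (z \in inorder (ins x t)) = (z == x) || (z \in inorder t).
Proof.
elim: t => [|l IHl k r IHr] /=; first by rewrite in_cons orbF.
case: ifP => _; rewrite /= !mem_cat !in_cons ?IHl ?IHr;
by case: (z == x); case: (z \in inorder l); case: (z == k); rewrite ?orbT.
Qed.

Lemma srt_ins x t : srt (inorder t) -> x \notin inorder t -> srt (inorder (ins x t)).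
Proof.
elim: t => [|l IHl k r IHr] //= /srt_node [sl sr al ar].
rewrite mem_cat in_cons negb_or negb_or => /and3P[xl xk xr].
case: ifP => xltk; apply/srt_node; split => //.
- by apply: IHl.
- apply/allP => z; rewrite mem_ins => /orP[/eqP -> //|]; exact: (allP al).
- by apply: IHr.
- apply/allP => z; rewrite mem_ins => /orP[/eqP -> |]; last exact: (allP ar).
  by rewrite lt_neqAle eq_sym xk /= leNgt xltk.
Qed.

Lemma below_node x t k : isnode t -> (forall z, z \in inorder t -> z < k) -> k <= x -> below x t.
Proof.
case: t => // l d r _ H kx; apply/hasP; exists d; first by rewrite inN eqxx orbT.
by apply: lt_le_trans (H _ _) kx; rewrite inN eqxx orbT.
Qed.

Lemma hang_all p t (Q : pred tree) : topp p t ->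
  (forall h, isnode h -> (forall z, z \in inorder h -> z \in inorder t) -> Q h) ->
  all Q (hangp p t).
Proof.
move=> tt H; apply: sub_all (hang_good tt) => h /andP[nh /allP Hh].
by apply: H => // z /Hh /andP[].
Qed.

Lemma icore p x a b T :
  srt (inorder T) -> x \notin inorder T -> ~~ p x -> topp p T ->
  all (fun z => (z < x) ==> (z <= a)) (inorder T) -> a <= x ->
  (a \in inorder T) || ~~ has (fun z => z < x) (inorder T) ->
  all (fun z => (x < z) ==> (b <= z)) (inorder T) -> x <= b ->
  (b \in inorder T) || ~~ has (fun z => x < z) (inorder T) ->
  topp p (ins x T) /\ hangp p (ins x T) = ins_hs a b x (hangp p T).
Proof.
elim: T => [|l IHl k r IHr] sT xnT px tT Ha ax Ha' Hb xb Hb'.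
  rewrite /= (negbTE px); split => // z; by rewrite inE => /eqP ->.
have [sl sr al ar] := (srt_node _ _ _).1 sT.
move: xnT; rewrite inN !negb_or => /and3P[xnl xnk xnr].
move: Ha Hb; rewrite [inorder _]/= !all_cat /= => /and3P[Hal Hak Har] /and3P[Hbl Hbk Hbr].
move: tT; rewrite [topp p _]/=; case pk: (p k); last first.
  move=> H.
  have sub : forall z, z \in inorder (ins x (Node l k r)) -> ~~ p z.
    by move=> z; rewrite mem_ins => /orP[/eqP -> //|]; apply: H.
  have [t1 h1] := untouched sub.
  split => //; rewrite h1.
  have -> : isnode (ins x (Node l k r)) = true by rewrite /=; case: ifP.
  have hitT : hit a b (Node l k r).
    have kT : k \in inorder (Node l k r) by rewrite inN eqxx orbT.
    case: (ltgtP k x) => [kx|xk|kx].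
    - move: Ha'; rewrite /hit; case/orP => [-> //|/hasPn H'].
      by move: (H' _ kT); rewrite kx.
    - move: Hb'; rewrite /hit; case/orP => [-> //|/hasPn H']; first by rewrite orbT.
      by move: (H' _ kT); rewrite xk.
    - by move: xnk; rewrite kx eqxx.
  by rewrite /ins_hs /= /gins hitT.
case=> tl tr; case: ifP => xk.
- have Hal' : (a \in inorder l) || ~~ has (fun z => z < x) (inorder l).
    move: Ha' => /orP[|]; last first.
      by rewrite [inorder _]/= has_cat negb_or => /andP[-> _]; rewrite orbT.
    rewrite inN; case/or3P => [->//|/eqP ak|ar'].
      by move: (le_lt_trans ax xk); rewrite ak ltxx.
    by move: (allP ar _ ar') (le_lt_trans ax xk) => /lt_trans H /H; rewrite ltxx.
  have bk : b <= k by move: Hbk; rewrite xk.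
  have Hbl' : (b \in inorder l) || ~~ has (fun z => x < z) (inorder l).
    have bT : b \in inorder (Node l k r).
      move: Hb' => /orP[//|/hasPn H'].
      by move: (H' k); rewrite inN eqxx orbT xk => /(_ isT).
    move: bT; rewrite inN; case/or3P => [->//|/eqP bk'|br].
      apply/orP; right; apply/hasPn => z zl; apply/negP => xz.
      by move: (allP Hbl _ zl); rewrite xz /= bk' leNgt (allP al _ zl).
    by move: (allP ar _ br); rewrite ltNge bk.
  have [t1 h1] := IHl sl xnl px tl Hal ax Hal' Hbl xb Hbl'.
  rewrite [topp _ _]/= [hangp _ (Node _ k r)]/= pk; split; first by [].
  rewrite h1 ins_hs_r //; apply: (hang_all (Q := fun t => ~~ hit a b t && ~~ below x t) tr) => h nh hsub.
  have kr : forall z, z \in inorder h -> k < z by move=> z /hsub; apply: (allP ar).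
  apply/andP; split.
    rewrite /hit negb_or; apply/andP; split; apply/negP => /kr.
      by rewrite ltNge (ltW (le_lt_trans ax xk)).
    by rewrite ltNge bk.
  apply/hasPn => z /kr kz; rewrite -leNgt; apply: ltW (lt_trans xk kz).
- have kx : k < x by rewrite lt_neqAle leNgt xk andbT; move: xnk; rewrite eq_sym.
  have ak : k <= a by move: Hak; rewrite kx.
  have Hbr' : (b \in inorder r) || ~~ has (fun z => x < z) (inorder r).
    move: Hb' => /orP[|]; last first.
      by rewrite [inorder _]/= has_cat negb_or /= => /andP[_ /norP[_ ->]]; rewrite orbT.
    rewrite inN; case/or3P => [bl|/eqP bk'|->//].
      by move: (allP al _ bl) (lt_le_trans kx xb) => /lt_trans H /H; rewrite ltxx.
    by move: xb; rewrite bk' leNgt kx.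
  have Har' : (a \in inorder r) || ~~ has (fun z => z < x) (inorder r).
    have aT : a \in inorder (Node l k r).
      move: Ha' => /orP[//|/hasPn H'].
      by move: (H' k); rewrite inN eqxx orbT kx => /(_ isT).
    move: aT; rewrite inN; case/or3P => [al'|/eqP ak'|->//].
      by move: (allP al _ al'); rewrite ltNge ak.
    apply/orP; right; apply/hasPn => z zr; apply/negP => zx.
    by move: (allP Har _ zr); rewrite zx /= ak' leNgt (allP ar _ zr).
  have [t1 h1] := IHr sr xnr px tr Har ax Har' Hbr xb Hbr'.
  rewrite [topp _ _]/= [hangp _ (Node l k _)]/= pk; split; first by [].
  rewrite h1 ins_hs_l //.
  apply: (hang_all (Q := fun t => ~~ hit a b t && below x t) tl) => h nh hsub.
  have kl : forall z, z \in inorder h -> z < k by move=> z /hsub; apply: (allP al).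
  apply/andP; split; last by apply: below_node nh kl (ltW kx).
  rewrite /hit negb_or; apply/andP; split; apply/negP => /kl.
    by rewrite ltNge ak.
  by rewrite ltNge (ltW (lt_le_trans kx xb)).
Qed.


Lemma srt_last_max (d : rat) s : srt s -> forall z, z \in s -> z <= last d s.
Proof.
case/lastP: s => // s' y; rewrite last_rcons /srt -cats1 sorted_pairwise; last exact: lt_trans.
rewrite pairwise_cat => /and3P[/allrelP H _ _] z; rewrite mem_cat mem_seq1 orbC => /orP[/eqP->//|zs].
by apply/ltW/H; rewrite ?mem_head.
Qed.

Lemma srt_head_min (d : rat) s : srt s -> forall z, z \in s -> head d s <= z.
Proof.
case: s => // y s; rewrite /srt /= path_sortedE; last exact: lt_trans.
case/andP => /allP H _ z; rewrite in_cons => /orP[/eqP->//|/H /ltW //].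
Qed.

Definition predk (x : rat) s := last x [seq z <- s | z < x].
Definition succk (x : rat) s := head x [seq z <- s | x < z].

Section PS.
Variables (x : rat) (s : seq rat).
Hypothesis ss : srt s.

Let f := [seq z <- s | z < x].
Let g := [seq z <- s | x < z].

Lemma srt_f : srt f. Proof. exact: (sorted_filter lt_trans _ ss). Qed.
Lemma srt_g : srt g. Proof. exact: (sorted_filter lt_trans _ ss). Qed.

Lemma pk1 : all (fun z => (z < x) ==> (z <= predk x s)) s.
Proof.
apply/allP => z zs /=; apply/implyP => zx; rewrite /predk -/f; apply: (srt_last_max x srt_f).
by rewrite mem_filter zx.
Qed.

Lemma pk_f : has (fun z => z < x) s -> predk x s \in f.
Proof.
rewrite has_filter /predk -/f; case/lastP: f => // f' y _.
by rewrite last_rcons mem_rcons mem_head.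
Qed.

Lemma pk_none : ~~ has (fun z => z < x) s -> predk x s = x.
Proof. by rewrite has_filter negbK /predk -/f => /eqP ->. Qed.

Lemma pk2 : predk x s <= x.
Proof.
case: (boolP (has (fun z => z < x) s)) => [/pk_f|/pk_none -> //].
by rewrite mem_filter => /andP[/ltW].
Qed.

Lemma pk3 : (predk x s \in s) || ~~ has (fun z => z < x) s.
Proof.
case: (boolP (has (fun z => z < x) s)) => [/pk_f|]; last by rewrite orbT.
by rewrite mem_filter => /andP[_ ->].
Qed.

Lemma pk4 : if predk x s == x then ~~ has (fun z => z < x) s
   else (predk x s < x) && ((predk x s \in s) || ~~ has (fun z => z < x) s).
Proof.
case: (boolP (has (fun z => z < x) s)) => [h|nh]; last by rewrite (pk_none nh) eqxx.
have := pk_f h; rewrite mem_filter => /andP[px ->].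
by rewrite (lt_eqF px) px.
Qed.

Lemma sk1 : all (fun z => (x < z) ==> (succk x s <= z)) s.
Proof.
apply/allP => z zs /=; apply/implyP => zx; rewrite /succk -/g; apply: (srt_head_min x srt_g).
by rewrite mem_filter zx.
Qed.

Lemma sk_g : has (fun z => x < z) s -> succk x s \in g.
Proof. by rewrite has_filter /succk -/g; case: g => // y g' _; rewrite mem_head. Qed.

Lemma sk_none : ~~ has (fun z => x < z) s -> succk x s = x.
Proof. by rewrite has_filter negbK /succk -/g => /eqP ->. Qed.

Lemma sk2 : x <= succk x s.
Proof.
case: (boolP (has (fun z => x < z) s)) => [/sk_g|/sk_none -> //].
by rewrite mem_filter => /andP[/ltW].
Qed.

Lemma sk3 : (succk x s \in s) || ~~ has (fun z => x < z) s.
Proof.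
case: (boolP (has (fun z => x < z) s)) => [/sk_g|]; last by rewrite orbT.
by rewrite mem_filter => /andP[_ ->].
Qed.
End PS.


Lemma topsetq P q t : (forall z, (z \in P) = q z) -> topset P t <-> topp q t.
Proof.
move=> E; split => H.
  by apply: (topp_cong _ ((topsetE _ _).1 H)) => z _; rewrite E.
by apply/topsetE; apply: (topp_cong _ H) => z _; rewrite E.
Qed.

Lemma hangq P q t : (forall z, (z \in P) = q z) -> hang P t = hangp q t.
Proof. by move=> E; rewrite hangE; apply: hangp_cong => z _; rewrite E. Qed.

Lemma down K x : x \notin K -> forall T S c, exec (x :: K) T S c ->
  srt (inorder T) -> inorder T =i x :: K -> x \notin S ->
  exists2 c', (c' <= c)%N & exec K (del x T) S c'.
Proof.
move=> xK T S c; elim => [T0 | T0 T' s S0 P c0 [[uP sP tP sinP] [[sT' eT'] tP' hP]] ex IH] sT eT xS.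
  by exists 0%N => //; constructor.
move: xS; rewrite in_cons negb_or => /andP[xs xS0].
have [c1 c1le ex1] := IH sT' eT' xS0.
have eqio : inorder T' = inorder T0.
  by apply: (irr_sorted_eq lt_trans ltxx sT' sT) => z; rewrite eT' eT.
have xT : x \in inorder T0 by rewrite eT mem_head.
have xT' : x \in inorder T' by rewrite eqio.
set m := predk x (inorder T0).
have Ha := @pk1 x _ sT; have Hm := pk4 x (inorder T0).
have Ha' : all (fun z => (z < x) ==> (z <= m)) (inorder T') by rewrite eqio.
have Hm' : if m == x then ~~ has (fun z => z < x) (inorder T')
   else (m < x) && ((m \in inorder T') || ~~ has (fun z => z < x) (inorder T')) by rewrite eqio.
set PK := if x \in P then (if (m != x) && (m \notin P) then m :: rem x P else rem x P) else P.
have memPK : forall z, (z \in PK) = qdel (fun z => z \in P) x m z.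
  move=> z; rewrite /PK /qdel; case xP: (x \in P) => //.
  case: ifP => [/andP[mx mP] | H].
    rewrite in_cons (mem_rem_uniq _ uP) inE.
    by case: (eqVneq z m) => [->|zm]; rewrite ?mx ?orbT ?orbF.
  rewrite (mem_rem_uniq _ uP) inE.
  case: (eqVneq z m) => [->|zm]; rewrite ?orbT ?orbF //.
  case: (eqVneq m x) => [->|mx]; first by [].
  by move: H; rewrite mx /= => /negbT; rewrite negbK => ->.
have [t1 h1] := core sT xT ((topsetE P T0).1 tP) Ha Hm.
have [t1' h1'] := core sT' xT' ((topsetE P T').1 tP') Ha' Hm'.
have mT : m != x -> m \in inorder T0.
  by move=> mx; move: Hm; rewrite (negbTE mx) => /andP[_ /orP[//|/pk_none]]; rewrite -/m => mE; rewrite mE eqxx in mx.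
exists (size PK + c1)%N.
  apply: leq_add => //; rewrite /PK; case: ifP => // xP.
  have P0 : (0 < size P)%N by move: xP; case: (P).
  by case: ifP => _; rewrite /= size_rem // ?prednK // leq_pred.
apply: exec_cons ex1; split; split.
- rewrite /PK; case: ifP => _ //; case: ifP => [/andP[_ mP]|_]; last exact: rem_uniq.
  rewrite /= rem_uniq // andbT; apply/negP => /mem_rem; apply/negP => //.
- move=> z; rewrite memPK inorder_del // mem_filter /qdel /=; case xP: (x \in P).
    move/andP=> [zx zPm]; rewrite zx /=; case/orP: zPm => [/sP //|/eqP zm].
    by rewrite zm; apply: mT; rewrite -zm.
  move=> zP; rewrite (sP _ zP) andbT; apply/eqP => zx.
  by rewrite -zx zP in xP.
- by apply/(topsetq _ memPK).
- rewrite memPK /qdel; case: ifP => _; last exact: sinP.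
  by rewrite sinP andbT eq_sym xs.
- split; first by rewrite inorder_del //; apply: (sorted_filter lt_trans _ sT').
  move=> z; rewrite inorder_del // mem_filter eT' in_cons /=.
  by case: (eqVneq z x) => [->|//]; rewrite (negbTE xK).
- by apply/(topsetq _ memPK).
by rewrite !(hangq _ memPK) h1 h1' -!hangE hP.
Qed.


Lemma up K x : x \notin K -> forall T S c, exec K T S c ->
  srt (inorder T) -> inorder T =i K -> exec (x :: K) (ins x T) S c.
Proof.
move=> xK T S c; elim => [T0 | T0 T' s S0 P c0 [[uP sP tP sinP] [[sT' eT'] tP' hP]] ex IH] sT eT.
  by constructor.
apply: exec_cons (IH sT' eT').
have eqio : inorder T' = inorder T0.
  by apply: (irr_sorted_eq lt_trans ltxx sT' sT) => z; rewrite eT' eT.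
have xnT : x \notin inorder T0 by rewrite eT.
have xnT' : x \notin inorder T' by rewrite eqio.
have px : ~~ (x \in P) by apply/negP => /sP; rewrite eT (negbTE xK).
have := icore sT xnT px ((topsetE P T0).1 tP) (@pk1 x _ sT) (pk2 x (inorder T0)) (pk3 x (inorder T0))
   (@sk1 x _ sT) (sk2 x (inorder T0)) (sk3 x (inorder T0)).
set a := predk x (inorder T0); set b := succk x (inorder T0) => -[t1 h1].
have := icore sT' xnT' px ((topsetE P T').1 tP'); rewrite eqio.
move=> /(_ a b (@pk1 x _ sT) (pk2 x (inorder T0)) (pk3 x (inorder T0))
   (@sk1 x _ sT) (sk2 x (inorder T0)) (sk3 x (inorder T0))) [t1' h1'].
split; split => //.
- by move=> z zP; rewrite mem_ins (sP _ zP) orbT.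
- exact/topsetE.
- split; first exact: srt_ins.
  by move=> z; rewrite mem_ins eT' in_cons.
- exact/topsetE.
by rewrite !hangE h1 h1' -!hangE hP.
Qed.

Lemma exec_eqi K1 K2 T S c : K1 =i K2 -> exec K1 T S c -> exec K2 T S c.
Proof.
move=> E; elim => [T0 | T0 T' s S0 P c0 [H1 [[sT' eT'] tP' hP]] ex IH]; first by constructor.
apply: exec_cons IH; split => //; split => //; split => // z; by rewrite eT' E.
Qed.

Lemma ach_eqi K1 K2 S c : K1 =i K2 -> achievable K1 S c -> achievable K2 S c.
Proof.
move=> E [T [[sT eT] ex]]; exists T; split; last exact: exec_eqi ex.
by split => // z; rewrite eT E.
Qed.

Lemma ach_up K x S c : x \notin K -> achievable K S c -> achievable (x :: K) S c.
Proof.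
move=> xK [T [[sT eT] ex]]; exists (ins x T); split; last exact: up ex sT eT.
split; first by apply: srt_ins; rewrite // eT.
by move=> z; rewrite mem_ins eT in_cons.
Qed.

Lemma ach_down K x S c : x \notin K -> x \notin S -> achievable (x :: K) S c ->
  exists2 c', (c' <= c)%N & achievable K S c'.
Proof.
move=> xK xS [T [[sT eT] ex]].
have [c' le ex'] := down xK ex sT eT xS.
exists c' => //; exists (del x T); split => //; split.
  by rewrite inorder_del //; apply: (sorted_filter lt_trans _ sT).
move=> z; rewrite inorder_del // mem_filter eT in_cons /=.
by case: (eqVneq z x) => [->|//]; rewrite (negbTE xK).
Qed.

Lemma topset_all P t : {subset inorder t <= P} -> topset P t.
Proof.
elim: t => //= l IHl k r IHr H.
rewrite H ?mem_cat ?in_cons ?eqxx ?orbT //; split.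
  by apply: IHl => z zl; apply: H; rewrite mem_cat zl.
by apply: IHr => z zr; apply: H; rewrite mem_cat in_cons zr !orbT.
Qed.

Lemma exec_exists K S T : all (fun s => s \in K) S -> srt (inorder T) -> inorder T =i K ->
  exists c, exec K T S c.
Proof.
move=> + sT eT; elim: S => [|s S IH] /=; first by exists 0%N; constructor.
case/andP=> sK SK; have [c ec] := IH SK.
exists (size (inorder T) + c)%N; apply: exec_cons ec; split; split => //.
all: try exact: (sorted_uniq lt_trans ltxx sT).
all: try by rewrite eT.
all: by apply: topset_all.
Qed.

Fixpoint spine (s : seq rat) := if s is k :: s' then Node Leaf k (spine s') else Leaf.
Lemma inorder_spine s : inorder (spine s) = s.
Proof. by elim: s => //= k s ->. Qed.

Lemma ach_exists K S : all (fun s => s \in K) S -> exists c, achievable K S c.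
Proof.
move=> SK; set T := spine (sort <=%O (undup K)).
have sT : srt (inorder T) by rewrite inorder_spine /srt sort_lt_sorted undup_uniq.
have eT : inorder T =i K by move=> z; rewrite inorder_spine mem_sort mem_undup.
have [c ec] := exec_exists SK sT eT.
by exists c, T.
Qed.

Lemma min_exists (P : nat -> Prop) : (exists c, P c) -> exists v, P v /\ forall c, P c -> (v <= c)%N.
Proof.
case=> c Pc.
suff H : forall n c, (c <= n)%N -> P c -> exists v, P v /\ forall c, P c -> (v <= c)%N.
  exact: H (leqnn c) Pc.
elim=> [|n IH] {}c cn {}Pc.
  by exists 0%N; split => //; move: cn; rewrite leqn0 => /eqP <-.
case: (classic (exists c', (c' <= n)%N /\ P c')) => [[c' [c'n Pc']] | N].
  exact: IH c'n Pc'.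
exists c; split => // d Pd; rewrite leqNgt; apply/negP => dc.
by apply: N; exists d; split => //; rewrite -ltnS (leq_trans dc cn).
Qed.

Unset Implicit Arguments.

Theorem mainTheorem15 (n : nat) (S : seq nat) (X : seq rat) :
  all (fun s => (1 <= s <= n)%N) S ->
  (forall x, x \in X -> x \notin natset n) ->
  exists v : nat,
    is_OPT (natset n) [seq (s%:R : rat) | s <- S] v /\
    is_OPT (natset n ++ X) [seq (s%:R : rat) | s <- S] v.
Proof.
move=> hS hX.
set S' := [seq (s%:R : rat) | s <- S].
have SK : all (fun s => s \in natset n) S'.
  rewrite all_map; apply: sub_all hS => s /= /andP[s1 sn].
  by rewrite /natset; apply: map_f; rewrite mem_iota s1 add1n ltnS.
have SKn : forall x, x \notin natset n -> x \notin S'.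
  by move=> x xn; apply/negP => xS; move: (allP SK _ xS); rewrite (negbTE xn).
have trans : forall X, (forall x, x \in X -> x \notin natset n) ->
  (forall c, achievable (natset n) S' c -> achievable (natset n ++ X) S' c) /\
  (forall c, achievable (natset n ++ X) S' c -> exists2 c', (c' <= c)%N & achievable (natset n) S' c').
  elim=> [|x X' IH] hX'.
    by rewrite cats0; split => // c h; exists c.
  have [IH1 IH2] := IH (fun y yX => hX' y (@mem_behead _ (x :: X') _ yX)).
  have xn : x \notin natset n by apply: hX'; rewrite mem_head.
  have E : natset n ++ x :: X' =i x :: (natset n ++ X').
    by move=> z; rewrite !(mem_cat, in_cons) orbCA.
  case: (boolP (x \in natset n ++ X')) => xin.
    have E' : natset n ++ x :: X' =i natset n ++ X'.
      by move=> z; rewrite E in_cons; case: (eqVneq z x) => [->|].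
    split => c h.
      by apply: (ach_eqi (fun z => esym (E' z))); apply: IH1.
    by apply: IH2; apply: (ach_eqi E').
  split => c h.
    by apply: (ach_eqi (fun z => esym (E z))); apply: ach_up => //; apply: IH1.
  have [c' le h'] := ach_down xin (SKn _ xn) (ach_eqi E h).
  have [c'' le' h''] := IH2 _ h'.
  by exists c'' => //; apply: leq_trans le' le.
have [T1 T2] := trans X hX.
have [v [Av minv]] := min_exists (ach_exists SK).
exists v; split; first by split.
split; first exact: T1.
move=> c /T2 [c' le Ac']; exact: leq_trans (minv _ Ac') le.
Qed.
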